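(* Let $p,q\ge 2$ be relatively prime integers, and for relatively prime positive integers $a,b$ with $b\ge2$ put $$T(a,b)=\sum_{n=1}^{b-1}\frac{\cot(\pi na/b)\cot(\pi n/b)}{\sin^2(\pi n/b)}.$$ Then $$45p\,T(p,q)+45q\,T(q,p)=p^4+q^4-5p^2q^2+3.$$ *)

(* Defs.v *)
From Stdlib Require Import Reals Lra Lia Arith List.
Open Scope R_scope.

Definition cot (x : R) : R := cos x / sin x.

Definition T (a b : nat) : R :=
  fold_right Rplus 0
    (map (fun n : nat =>
            cot (PI * INR n * INR a / INR b) * cot (PI * INR n / INR b)
            / (sin (PI * INR n / INR b)) ^ 2)
         (seq 1 (b - 1))).

(* Main.v *)
Require Import Defs.
From Stdlib Require Import Reals Lra Lia Arith List ZArith.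
From Coquelicot Require Import Complex.
Open Scope R_scope.
Open Scope R_scope.

Definition ssum (f : nat -> R) (l : list nat) : R := fold_right Rplus 0 (map f l).

Lemma ssum_app f l1 l2 : ssum f (l1 ++ l2) = ssum f l1 + ssum f l2.
Proof. unfold ssum; induction l1; simpl; [ring| rewrite IHl1; ring]. Qed.

Lemma ssum_ext f g l : (forall x, In x l -> f x = g x) -> ssum f l = ssum g l.
Proof. unfold ssum; induction l; simpl; intros H; auto.
rewrite H by auto. rewrite IHl; auto. Qed.

Lemma ssum_plus f g l : ssum (fun x => f x + g x) l = ssum f l + ssum g l.
Proof. unfold ssum; induction l; simpl; [ring| rewrite IHl; ring]. Qed.

Lemma ssum_scal c f l : ssum (fun x => c * f x) l = c * ssum f l.
Proof. unfold ssum; induction l; simpl; [ring| rewrite IHl; ring]. Qed.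

Lemma ssum_const c l : ssum (fun _ => c) l = INR (length l) * c.
Proof. unfold ssum; induction l; simpl length; [simpl; ring| rewrite S_INR; simpl; rewrite IHl; ring]. Qed.

Lemma ssum_swap (f : nat -> nat -> R) l1 l2 :
  ssum (fun a => ssum (fun b => f a b) l2) l1 = ssum (fun b => ssum (fun a => f a b) l1) l2.
Proof. induction l1.
- unfold ssum at 1; simpl. change (0 = ssum (fun _ => 0) l2). rewrite ssum_const; ring.
- change (ssum (f a) l2 + ssum (fun a => ssum (fun b => f a b) l2) l1 =
    ssum (fun b => f a b + ssum (fun a => f a b) l1) l2).
  rewrite ssum_plus, IHl1. reflexivity. Qed.

Lemma ssum_prod (f g : nat -> R) l1 l2 :
  ssum (fun a => ssum (fun b => f a * g b) l2) l1 = ssum f l1 * ssum g l2.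
Proof. transitivity (ssum (fun a => f a * ssum g l2) l1).
 apply ssum_ext; intros; rewrite <- ssum_scal; auto.
 rewrite Rmult_comm, <- ssum_scal; apply ssum_ext; intros; ring. Qed.

Lemma ssum_rev (f : nat -> nat) (h : nat -> R) : forall k a c, (a + k <= c + 1)%nat ->
  ssum (fun i => h (c - i)%nat) (seq a k) = ssum h (seq (c + 1 - a - k) k).
Proof. induction k; intros a c Hk. reflexivity.
 rewrite (seq_S k (c + 1 - a - S k)), ssum_app.
 change (seq a (S k)) with (a :: seq (S a) k).
 unfold ssum at 1; simpl; fold (ssum (fun i => h (c - i)%nat) (seq (S a) k)).
 rewrite IHk by lia. unfold ssum at 3; simpl.
 replace (c + 1 - S a - k)%nat with (c + 1 - a - S k)%nat by lia.
 replace (c + 1 - a - S k + k)%nat with (c - a)%nat by lia. ring. Qed.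

Lemma sin_pi_frac (a b : nat) : (0 < b)%nat -> sin (PI * INR a / INR b) = 0 -> Nat.divide b a.
Proof. intros Hb H. apply sin_eq_0_0 in H. destruct H as [k Hk].
 assert (Hb' : INR b <> 0) by (apply not_0_INR; lia).
 assert (INR a = IZR k * INR b).
 { apply Rmult_eq_reg_l with PI. 2: apply PI_neq0.
   replace (PI * INR a) with (PI * INR a / INR b * INR b) by (field; auto).
   rewrite Hk; ring. }
 rewrite !INR_IZR_INZ, <- mult_IZR in H. apply eq_IZR in H.
 assert (0 <= k)%Z by nia.
 exists (Z.to_nat k). apply Nat2Z.inj. rewrite Nat2Z.inj_mul, Z2Nat.id; lia. Qed.

Definition cot_shift_stmt := True.
Lemma cot_shift t n : cot (t + INR n * PI) = cot t.
Proof. induction n. simpl. f_equal; ring.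
 rewrite S_INR. replace (t + (INR n + 1) * PI) with ((t + INR n * PI) + PI) by ring.
 unfold cot in *. rewrite neg_sin, neg_cos. unfold Rdiv in *. rewrite Rinv_opp. rewrite <- IHn. ring. Qed.

Lemma cot_opp t : cot (- t) = - cot t.
Proof. unfold cot. rewrite sin_neg, cos_neg. unfold Rdiv; rewrite Rinv_opp; ring. Qed.

Open Scope C_scope.
Definition csum (f : nat -> C) (l : list nat) : C := fold_right Cplus (RtoC 0) (map f l).
Lemma csum_app f l1 l2 : csum f (l1 ++ l2) = csum f l1 + csum f l2.
Proof. unfold csum; induction l1; simpl; [ring| rewrite IHl1; ring]. Qed.
Lemma csum_ext f g l : (forall x, In x l -> f x = g x) -> csum f l = csum g l.
Proof. unfold csum; induction l; simpl; intros H; auto.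
rewrite H by auto. rewrite IHl; auto. Qed.
Lemma csum_plus f g l : csum (fun x => f x + g x) l = csum f l + csum g l.
Proof. unfold csum; induction l; simpl; [ring| rewrite IHl; ring]. Qed.
Lemma csum_scal c f l : csum (fun x => c * f x) l = c * csum f l.
Proof. unfold csum; induction l; simpl; [ring| rewrite IHl; ring]. Qed.
Lemma csum_const c l : csum (fun _ => c) l = RtoC (INR (length l)) * c.
Proof. unfold csum; induction l; simpl length; [simpl; ring| rewrite S_INR; simpl; rewrite IHl, RtoC_plus; ring]. Qed.
Lemma csum_RtoC f l : RtoC (ssum f l) = csum (fun x => RtoC (f x)) l.
Proof. unfold ssum, csum; induction l; simpl; auto. rewrite RtoC_plus, IHl; auto. Qed.
Lemma csum_swap (f : nat -> nat -> C) l1 l2 :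
  csum (fun a => csum (fun b => f a b) l2) l1 = csum (fun b => csum (fun a => f a b) l1) l2.
Proof. induction l1.
- unfold csum at 1; simpl. change (RtoC 0 = csum (fun _ => RtoC 0) l2). rewrite csum_const; ring.
- change (csum (f a) l2 + csum (fun a => csum (fun b => f a b) l2) l1 =
    csum (fun b => f a b + csum (fun a => f a b) l1) l2).
  rewrite csum_plus, IHl1. reflexivity. Qed.

Lemma geom (z : C) n : (RtoC 1 - z) * csum (fun k => Cpow z k) (seq 0 n) = RtoC 1 - Cpow z n.
Proof. induction n. unfold csum; simpl; ring.
 rewrite seq_S, csum_app. unfold csum at 2. simpl. rewrite Cmult_plus_distr_l, IHn. ring. Qed.
Open Scope C_scope.

Definition e (t : R) : C := (cos t, sin t).
Lemma e_add s t : e (s + t) = e s * e t.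
Proof. unfold e, Cmult; simpl. rewrite cos_plus, sin_plus. f_equal; ring. Qed.
Lemma e_pow t n : Cpow (e t) n = e (INR n * t).
Proof. induction n. simpl. unfold e. rewrite Rmult_0_l, cos_0, sin_0. reflexivity.
 simpl Cpow. rewrite IHn, <- e_add, S_INR. f_equal. ring. Qed.
Lemma e_0 : e 0 = RtoC 1.
Proof. unfold e. rewrite cos_0, sin_0. reflexivity. Qed.
Lemma e_period t k : e (t + 2 * INR k * PI) = e t.
Proof. unfold e. rewrite cos_period, sin_period. reflexivity. Qed.
Lemma e_ne1 y : sin y <> 0%R -> RtoC 1 - e (2 * y) <> RtoC 0.
Proof. intros H E. apply (f_equal fst) in E. simpl in E. rewrite cos_2a_sin in E.
 apply H. nra. Qed.
Lemma cot_C y : sin y <> 0%R -> RtoC (cot y) = Ci * (RtoC 1 - RtoC 2 / (RtoC 1 - e (2 * y))).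
Proof. intros H. pose proof (e_ne1 y H) as Hn.
 assert (K : RtoC (cot y) * (RtoC 1 - e (2*y)) = - Ci * (e (2*y) + RtoC 1)).
 { unfold e, Cmult, Copp, Cplus, Cminus, Copp, Ci, RtoC; simpl.
   rewrite cos_2a_sin, sin_2a. unfold cot.
   assert (Hs : (sin y * sin y + cos y * cos y = 1)%R) by (pose proof (sin2_cos2 y); unfold Rsqr in *; lra).
   f_equal. field; auto.
   replace (1 - 2 * sin y * sin y + 1)%R with (2 * cos y * cos y)%R by nra. field; auto. }
 assert (RtoC (cot y) = - Ci * (e (2*y) + RtoC 1) / (RtoC 1 - e (2*y))).
 { rewrite <- K. field. auto. }
 rewrite H0. field. auto. Qed.

Lemma csum_cons f a l : csum f (a :: l) = f a + csum f l.
Proof. reflexivity. Qed.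

Lemma C_zero_of_mult a s : a <> RtoC 0 -> a * s = RtoC 0 -> s = RtoC 0.
Proof. intros Ha H. replace s with (/ a * (a * s)) by (field; auto). rewrite H. ring. Qed.

Lemma inv_sum p x : (1 <= p)%nat -> sin (INR p * x) <> 0%R ->
  (forall j, (j < p)%nat -> sin (x + PI * INR j / INR p) <> 0%R) ->
  csum (fun j => RtoC 1 / (RtoC 1 - e (2 * (x + PI * INR j / INR p)))) (seq 0 p)
  = RtoC (INR p) / (RtoC 1 - e (2 * (INR p * x))).
Proof. intros Hp Hx Hj.
 assert (Hp' : INR p <> 0%R) by (apply not_0_INR; lia).
 pose (W := e (2 * (INR p * x))).
 assert (HW : RtoC 1 - W <> RtoC 0) by (apply e_ne1; auto).
 rewrite (csum_ext _ (fun j => / (RtoC 1 - W) * csum (fun k => Cpow (e (2 * (x + PI * INR j / INR p))) k) (seq 0 p))).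
 2:{ intros j Hin. apply in_seq in Hin.
     set (z := e (2 * (x + PI * INR j / INR p))).
     assert (Hz : RtoC 1 - z <> RtoC 0) by (apply e_ne1, Hj; lia).
     pose proof (geom z p) as G.
     assert (Zp : Cpow z p = W).
     { unfold z, W. rewrite e_pow.
       replace (INR p * (2 * (x + PI * INR j / INR p)))%R with (2 * (INR p * x) + 2 * INR j * PI)%R by (field; auto).
       apply e_period. }
     rewrite Zp in G.
     replace (csum (fun k => Cpow z k) (seq 0 p)) with ((RtoC 1 - W) / (RtoC 1 - z)) by (rewrite <- G; field; auto).
     field. split; auto. }
 rewrite csum_scal, (csum_swap (fun j k => Cpow (e (2 * (x + PI * INR j / INR p))%R) k)).
 assert (Hs: seq 0 p = 0%nat :: seq 1 (p-1)) by (destruct p; [lia| simpl; f_equal; f_equal; lia]).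
 rewrite Hs, csum_cons, <- Hs.
 rewrite (csum_ext _ (fun _ => RtoC 0) (seq 1 (p-1))).
 2:{ intros k Hk. apply in_seq in Hk.
     set (zeta := e (2 * (PI * INR k / INR p))).
     rewrite (csum_ext _ (fun j => e (INR k * (2 * x)) * Cpow zeta j)).
     2:{ intros j _. unfold zeta. rewrite !e_pow, <- e_add. f_equal. field. auto. }
     rewrite csum_scal.
     assert (Hz : RtoC 1 - zeta <> RtoC 0).
     { apply e_ne1. intro S0. apply sin_pi_frac in S0. 2: lia.
       destruct S0 as [c Hc]. destruct c; simpl in Hc; lia. }
     pose proof (geom zeta p) as G.
     assert (Zp : Cpow zeta p = RtoC 1).
     { unfold zeta. rewrite e_pow.
       replace (INR p * (2 * (PI * INR k / INR p)))%R with (0 + 2 * INR k * PI)%R by (field; auto).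
       rewrite e_period. apply e_0. }
     rewrite Zp in G. replace (RtoC 1 - RtoC 1) with (RtoC 0) in G by ring.
     apply C_zero_of_mult in G; auto. change (Cpow zeta) with (fun k => Cpow zeta k). rewrite G. ring. }
 rewrite csum_const.
 rewrite (csum_ext _ (fun _ => RtoC 1)). 2:{ intros; reflexivity. }
 rewrite csum_const. rewrite length_seq.
 fold W. unfold Cdiv. ring. Qed.

Lemma cot_sum p x : (1 <= p)%nat -> sin (INR p * x) <> 0%R ->
  (forall j, (j < p)%nat -> sin (x + PI * INR j / INR p) <> 0%R) ->
  ssum (fun j => cot (x + PI * INR j / INR p)) (seq 0 p) = (INR p * cot (INR p * x))%R.
Proof. intros Hp Hx Hj.
 assert (E : RtoC (ssum (fun j => cot (x + PI * INR j / INR p)) (seq 0 p)) = RtoC (INR p * cot (INR p * x))).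
 { rewrite csum_RtoC.
   rewrite (csum_ext _ (fun j => Ci + (- (RtoC 2 * Ci)) * (RtoC 1 / (RtoC 1 - e (2 * (x + PI * INR j / INR p)))))).
   2:{ intros j Hin. apply in_seq in Hin. rewrite cot_C by (apply Hj; lia).
       assert (RtoC 1 - e (2 * (x + PI * INR j / INR p)) <> RtoC 0) by (apply e_ne1, Hj; lia).
       field. auto. }
   rewrite csum_plus, csum_scal, csum_const, inv_sum by auto.
   rewrite length_seq, RtoC_mult, cot_C by auto.
   assert (RtoC 1 - e (2 * (INR p * x)) <> RtoC 0) by (apply e_ne1; auto).
   field. auto. }
 apply (f_equal fst) in E. simpl in E. exact E. Qed.
Open Scope R_scope.

Lemma ssum_cons f a l : ssum f (a :: l) = f a + ssum f l.
Proof. reflexivity. Qed.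

Lemma seq0_split p : (1 <= p)%nat -> seq 0 p = 0%nat :: seq 1 (p - 1).
Proof. intros; destruct p; [lia| simpl; f_equal; f_equal; lia]. Qed.

Lemma per_term p x (G B : R -> R) :
  (1 <= p)%nat -> sin x <> 0 -> sin (INR p * x) <> 0 ->
  (forall j, (j < p)%nat -> sin (x + PI * INR j / INR p) <> 0) ->
  (forall t, sin t <> 0 -> cot t * G t = B (cot t)) ->
  INR p * (cot (INR p * x) * G x) =
  B (cot x) + ssum (fun m => cot (x + PI * INR m / INR p) * G x) (seq 1 (p - 1)).
Proof. intros Hp Hx Hpx Hj HB.
 rewrite <- Rmult_assoc, <- cot_sum by auto. rewrite seq0_split, ssum_cons by auto.
 replace (x + PI * INR 0 / INR p) with x by (simpl; field; apply not_0_INR; lia).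
 rewrite Rmult_plus_distr_r, HB by auto. f_equal.
 rewrite Rmult_comm, <- ssum_scal. apply ssum_ext; intros; ring. Qed.

Lemma sin_nz1 q n : (1 <= n < q)%nat -> sin (PI * INR n / INR q) <> 0.
Proof. intros H S. apply sin_pi_frac in S; [|lia]. destruct S as [c Hc].
 destruct c; simpl in Hc; lia. Qed.

Lemma sin_nz2 p q n : (1 <= p)%nat -> Nat.gcd p q = 1%nat -> (1 <= n < q)%nat ->
  sin (INR p * (PI * INR n / INR q)) <> 0.
Proof. intros Hp Hg H S.
 replace (INR p * (PI * INR n / INR q)) with (PI * INR (n * p) / INR q) in S
   by (rewrite mult_INR; field; apply not_0_INR; lia).
 apply sin_pi_frac in S; [|lia].
 rewrite Nat.mul_comm in S. apply Nat.gauss in S. 2: rewrite Nat.gcd_comm; auto.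
 destruct S as [c Hc]. destruct c; simpl in Hc; lia. Qed.

Lemma sin_nz3 p q n m : (1 <= p)%nat -> Nat.gcd p q = 1%nat -> (1 <= n < q)%nat -> (m < p)%nat ->
  sin (PI * INR n / INR q + PI * INR m / INR p) <> 0.
Proof. intros Hp Hg H Hm S.
 replace (PI * INR n / INR q + PI * INR m / INR p) with (PI * INR (n * p + m * q) / INR (q * p)) in S
   by (rewrite plus_INR, !mult_INR; field; split; apply not_0_INR; lia).
 apply sin_pi_frac in S; [|nia].
 destruct S as [c Hc].
 assert (Nat.divide q (p * n)).
 { exists (c * p - m)%nat. rewrite Nat.mul_sub_distr_r. nia. }
 apply Nat.gauss in H0. 2: rewrite Nat.gcd_comm; auto.
 destruct H0 as [d Hd]. destruct d; simpl in Hd; lia. Qed.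

Lemma pair_lemma p q (G B : R -> R) (E : R -> R -> R) :
  (1 <= p)%nat -> (1 <= q)%nat -> Nat.gcd p q = 1%nat ->
  (forall t, sin t <> 0 -> cot t * G t = B (cot t)) ->
  (forall a b, sin a <> 0 -> sin b <> 0 -> sin (a + b) <> 0 ->
      cot (a + b) * (G a + G b) = E (cot a) (cot b)) ->
  INR p * ssum (fun n => cot (PI * INR n * INR p / INR q) * G (PI * INR n / INR q)) (seq 1 (q - 1))
  + INR q * ssum (fun m => cot (PI * INR m * INR q / INR p) * G (PI * INR m / INR p)) (seq 1 (p - 1))
  = ssum (fun n => B (cot (PI * INR n / INR q))) (seq 1 (q - 1))
  + ssum (fun m => B (cot (PI * INR m / INR p))) (seq 1 (p - 1))
  + ssum (fun n => ssum (fun m => E (cot (PI * INR n / INR q)) (cot (PI * INR m / INR p))) (seq 1 (p - 1))) (seq 1 (q - 1)).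
Proof. intros Hp Hq Hg HB HE.
 assert (Hg' : Nat.gcd q p = 1%nat) by (rewrite Nat.gcd_comm; auto).
 rewrite <- !ssum_scal.
 rewrite (ssum_ext _ (fun n => B (cot (PI * INR n / INR q)) +
    ssum (fun m => cot (PI * INR n / INR q + PI * INR m / INR p) * G (PI * INR n / INR q)) (seq 1 (p - 1)))).
 2:{ intros n Hn. apply in_seq in Hn.
     replace (PI * INR n * INR p / INR q) with (INR p * (PI * INR n / INR q))
       by (field; apply not_0_INR; lia).
     apply per_term; auto. apply sin_nz1; lia. apply sin_nz2; auto; lia.
     intros; apply sin_nz3; auto; lia. }
 rewrite (ssum_ext (fun m => INR q * (cot (PI * INR m * INR q / INR p) * G (PI * INR m / INR p)))
   (fun m => B (cot (PI * INR m / INR p)) +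
    ssum (fun n => cot (PI * INR n / INR q + PI * INR m / INR p) * G (PI * INR m / INR p)) (seq 1 (q - 1)))).
 2:{ intros m Hm. apply in_seq in Hm.
     replace (PI * INR m * INR q / INR p) with (INR q * (PI * INR m / INR p))
       by (field; apply not_0_INR; lia).
     rewrite per_term with (B := B); auto. f_equal. apply ssum_ext; intros n Hn.
     apply in_seq in Hn. f_equal. f_equal. ring.
     apply sin_nz1; lia. apply sin_nz2; auto; lia.
     intros; apply sin_nz3; auto; lia. }
 rewrite !ssum_plus.
 rewrite (ssum_swap (fun m n => cot (PI * INR n / INR q + PI * INR m / INR p) * G (PI * INR m / INR p))).
 assert (K : ssum (fun a => ssum (fun m => cot (PI * INR a / INR q + PI * INR m / INR p) * G (PI * INR a / INR q)) (seq 1 (p - 1))) (seq 1 (q - 1))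
   + ssum (fun a => ssum (fun b => cot (PI * INR a / INR q + PI * INR b / INR p) * G (PI * INR b / INR p)) (seq 1 (p - 1))) (seq 1 (q - 1))
   = ssum (fun n => ssum (fun m => E (cot (PI * INR n / INR q)) (cot (PI * INR m / INR p))) (seq 1 (p - 1))) (seq 1 (q - 1))).
 { rewrite <- ssum_plus. apply ssum_ext; intros n Hn. rewrite <- ssum_plus.
   apply ssum_ext; intros m Hm. apply in_seq in Hn, Hm.
   rewrite <- Rmult_plus_distr_l. apply HE. apply sin_nz1; lia. apply sin_nz1; lia.
   apply sin_nz3; auto; lia. }
 rewrite <- K. ring. Qed.
Open Scope R_scope.

Definition F (B : R -> R) (q : nat) : R := ssum (fun n => B (cot (PI * INR n / INR q))) (seq 1 (q - 1)).

Lemma recur p (G B : R -> R) (E : R -> R -> R) :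
  (1 <= p)%nat ->
  (forall t, sin t <> 0 -> cot t * G t = B (cot t)) ->
  (forall a b, sin a <> 0 -> sin b <> 0 -> sin (a + b) <> 0 ->
      cot (a + b) * (G a + G b) = E (cot a) (cot b)) ->
  INR (S p) * F B (S p) = INR p * F B p -
   ssum (fun n => ssum (fun m => E (cot (PI * INR n / INR (S p))) (cot (PI * INR m / INR p))) (seq 1 (p - 1))) (seq 1 (S p - 1)).
Proof. intros Hp HB HE.
 assert (Hg : Nat.gcd p (S p) = 1%nat).
 { replace (S p) with (1 + p)%nat by lia. rewrite Nat.gcd_add_diag_r.
   apply Nat.divide_1_r, Nat.gcd_divide_r. }
 pose proof (pair_lemma p (S p) G B E Hp ltac:(lia) Hg HB HE) as P.
 rewrite (ssum_ext (fun n => cot (PI * INR n * INR p / INR (S p)) * G (PI * INR n / INR (S p)))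
   (fun n => - B (cot (PI * INR n / INR (S p))))) in P.
 2:{ intros n Hn. apply in_seq in Hn.
     replace (PI * INR n * INR p / INR (S p)) with (- (PI * INR n / INR (S p)) + INR n * PI)
       by (rewrite S_INR; field; pose proof (pos_INR p); lra).
     rewrite cot_shift, cot_opp, <- HB. ring. apply sin_nz1; lia. }
 rewrite (ssum_ext (fun m => cot (PI * INR m * INR (S p) / INR p) * G (PI * INR m / INR p))
   (fun m => B (cot (PI * INR m / INR p)))) in P.
 2:{ intros m Hm. apply in_seq in Hm.
     replace (PI * INR m * INR (S p) / INR p) with (PI * INR m / INR p + INR m * PI)
       by (rewrite S_INR; field; apply not_0_INR; lia).
     rewrite cot_shift, <- HB. ring. apply sin_nz1; lia. }
 rewrite (ssum_ext (fun n => - B (cot (PI * INR n / INR (S p))))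
   (fun n => -1 * B (cot (PI * INR n / INR (S p))))) in P by (intros; ring).
 rewrite ssum_scal in P. unfold F. rewrite S_INR in *. lra. Qed.

Lemma ssum_quart (c0 c1 c2 c3 c4 : R) (g : nat -> R) l :
  ssum (fun m => c0 + c1 * g m ^ 1 + c2 * g m ^ 2 + c3 * g m ^ 3 + c4 * g m ^ 4) l =
  c0 * INR (length l) + c1 * ssum (fun m => g m ^ 1) l + c2 * ssum (fun m => g m ^ 2) l
  + c3 * ssum (fun m => g m ^ 3) l + c4 * ssum (fun m => g m ^ 4) l.
Proof. rewrite !ssum_plus, !ssum_scal, ssum_const. ring. Qed.

Lemma pow_opp_odd x j : (- x) ^ (2 * j + 1) = - x ^ (2 * j + 1).
Proof. induction j. simpl; ring.
 replace (2 * S j + 1)%nat with (S (S (2 * j + 1))) by lia. rewrite <- !tech_pow_Rmult, IHj. ring. Qed.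

Lemma odd_zero q k : (1 <= q)%nat -> Nat.odd k = true ->
  ssum (fun n => cot (PI * INR n / INR q) ^ k) (seq 1 (q - 1)) = 0.
Proof. intros Hq Hk.
 pose proof (ssum_rev (fun x => x) (fun n => cot (PI * INR n / INR q) ^ k) (q - 1) 1 q ltac:(lia)) as R.
 replace (q + 1 - 1 - (q - 1))%nat with 1%nat in R by lia.
 rewrite (ssum_ext _ (fun n => -1 * cot (PI * INR n / INR q) ^ k)) in R.
 2:{ intros n Hn. apply in_seq in Hn. rewrite minus_INR by lia.
     replace (PI * (INR q - INR n) / INR q) with (- (PI * INR n / INR q) + INR 1 * PI)
      by (simpl; field; apply not_0_INR; lia).
     rewrite cot_shift, cot_opp.
     apply Nat.odd_spec in Hk. destruct Hk as [j ->].
     rewrite pow_opp_odd. ring. }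
 rewrite ssum_scal in R. lra. Qed.
Open Scope R_scope.

Definition E2 (u v : R) := u * v - 1.
Definition E4 (u v : R) := u^3*v + u*v^3 - u^2*v^2 + 2*u*v - u^2 - v^2 - 1.
Definition G4 (t : R) := cot t / sin t ^ 2.
Definition F2 p := F (fun u => u ^ 2) p.

Lemma HE2 a b : sin a <> 0 -> sin b <> 0 -> sin (a + b) <> 0 ->
  cot (a + b) * (cot a + cot b) = E2 (cot a) (cot b).
Proof. intros Ha Hb Hab. unfold E2, cot. rewrite sin_plus, cos_plus in *. field. auto. Qed.

Lemma csc2 t : sin t <> 0 -> G4 t = cot t * (1 + cot t ^ 2).
Proof. intros H. unfold G4, cot. pose proof (sin2_cos2 t) as S. unfold Rsqr in S.
 field_simplify; auto.
 replace (cos t ^ 3 + cos t * sin t ^ 2) with (cos t * (sin t * sin t + cos t * cos t)) by ring.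
 rewrite S. field. auto. Qed.

Lemma HB4 t : sin t <> 0 -> cot t * G4 t = cot t ^ 2 + cot t ^ 4.
Proof. intros H. rewrite csc2 by auto. ring. Qed.

Lemma HE4 a b : sin a <> 0 -> sin b <> 0 -> sin (a + b) <> 0 ->
  cot (a + b) * (G4 a + G4 b) = E4 (cot a) (cot b).
Proof. intros Ha Hb Hab. rewrite !csc2 by auto.
 replace (cot a * (1 + cot a ^ 2) + cot b * (1 + cot b ^ 2)) with
   ((cot a + cot b) * (1 + cot a ^ 2 - cot a * cot b + cot b ^ 2)) by ring.
 rewrite <- Rmult_assoc, HE2 by auto. unfold E2, E4. ring. Qed.

Lemma EE2_eval p q : (1 <= p)%nat -> (1 <= q)%nat ->
  ssum (fun n => ssum (fun m => E2 (cot (PI * INR n / INR q)) (cot (PI * INR m / INR p))) (seq 1 (p - 1))) (seq 1 (q - 1))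
  = - INR (q - 1) * INR (p - 1).
Proof. intros Hp Hq.
 rewrite (ssum_ext _ (fun n => (- INR (p - 1)) + 0 * (cot (PI * INR n / INR q)) ^ 1 + 0 * (cot (PI * INR n / INR q)) ^ 2
     + 0 * (cot (PI * INR n / INR q)) ^ 3 + 0 * (cot (PI * INR n / INR q)) ^ 4)).
 2:{ intros n _.
     rewrite (ssum_ext _ (fun m => -1 + cot (PI * INR n / INR q) * (cot (PI * INR m / INR p)) ^ 1 + 0 * (cot (PI * INR m / INR p)) ^ 2
       + 0 * (cot (PI * INR m / INR p)) ^ 3 + 0 * (cot (PI * INR m / INR p)) ^ 4)) by (intros; unfold E2; ring).
     rewrite ssum_quart, odd_zero, length_seq by auto. ring. }
 rewrite ssum_quart, length_seq. ring. Qed.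

Lemma EE4_eval p q : (1 <= p)%nat -> (1 <= q)%nat ->
  ssum (fun n => ssum (fun m => E4 (cot (PI * INR n / INR q)) (cot (PI * INR m / INR p))) (seq 1 (p - 1))) (seq 1 (q - 1))
  = - (INR (p - 1) + F2 p) * (INR (q - 1) + F2 q).
Proof. intros Hp Hq.
 set (c := INR (p - 1) + F2 p).
 rewrite (ssum_ext _ (fun n => (- c) + 0 * (cot (PI * INR n / INR q)) ^ 1 + (- c) * (cot (PI * INR n / INR q)) ^ 2
     + 0 * (cot (PI * INR n / INR q)) ^ 3 + 0 * (cot (PI * INR n / INR q)) ^ 4)).
 2:{ intros n _. set (u := cot (PI * INR n / INR q)).
     rewrite (ssum_ext _ (fun m => (- u^2 - 1) + (u^3 + 2 * u) * (cot (PI * INR m / INR p)) ^ 1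
       + (- u^2 - 1) * (cot (PI * INR m / INR p)) ^ 2
       + u * (cot (PI * INR m / INR p)) ^ 3 + 0 * (cot (PI * INR m / INR p)) ^ 4)) by (intros; unfold E4; ring).
     rewrite ssum_quart, (odd_zero p 1), (odd_zero p 3), length_seq by auto. unfold c, F2, F. ring. }
 rewrite ssum_quart, length_seq. unfold F2, F. ring. Qed.

Lemma F2_closed p : (1 <= p)%nat -> F2 p = (INR p - 1) * (INR p - 2) / 3.
Proof. induction p; intros Hp. lia. destruct p.
 - unfold F2, F. simpl. unfold ssum. simpl. lra.
 - pose proof (recur (S p) cot (fun u => u ^ 2) E2 ltac:(lia) ltac:(intros; simpl; ring) HE2) as H.
   rewrite EE2_eval in H by lia. fold (F2 (S (S p))) (F2 (S p)) in H.
   rewrite IHp in H by lia.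
   replace (S (S p) - 1)%nat with (S p) in H by lia. replace (S p - 1)%nat with p in H by lia.
   apply Rmult_eq_reg_l with (INR (S (S p))). 2: apply not_0_INR; lia.
   rewrite H. rewrite !S_INR. field. Qed.

Definition F4 p := F (fun u => u ^ 2 + u ^ 4) p.

Lemma F4_closed p : (1 <= p)%nat -> F4 p = (INR p - 1) * (INR p - 2) * (INR p + 1) * (INR p + 2) / 45.
Proof. induction p; intros Hp. lia. destruct p.
 - unfold F4, F. simpl. unfold ssum. simpl. lra.
 - pose proof (recur (S p) G4 (fun u => u ^ 2 + u ^ 4) E4 ltac:(lia) HB4 HE4) as H.
   rewrite EE4_eval in H by lia. fold (F4 (S (S p))) (F4 (S p)) in H.
   rewrite IHp, !F2_closed in H by lia.
   replace (S (S p) - 1)%nat with (S p) in H by lia. replace (S p - 1)%nat with p in H by lia.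
   apply Rmult_eq_reg_l with (INR (S (S p))). 2: apply not_0_INR; lia.
   rewrite H. rewrite !S_INR. field. Qed.

Theorem mainTheorem16 (p q : nat) (hp : (2 <= p)%nat) (hq : (2 <= q)%nat)
  (hpq : Nat.gcd p q = 1%nat) :
  45 * INR p * T p q + 45 * INR q * T q p
  = INR p ^ 4 + INR q ^ 4 - 5 * INR p ^ 2 * INR q ^ 2 + 3.
Proof.
 assert (TE : forall a b, T a b = ssum (fun n => cot (PI * INR n * INR a / INR b) * G4 (PI * INR n / INR b)) (seq 1 (b - 1))).
 { intros a b. unfold T. apply ssum_ext. intros; unfold G4, Rdiv; ring. }
 rewrite !TE.
 pose proof (pair_lemma p q G4 (fun u => u ^ 2 + u ^ 4) E4 ltac:(lia) ltac:(lia) hpq HB4 HE4) as P.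
 rewrite EE4_eval in P by lia.
 change (ssum (fun n => cot (PI * INR n / INR q) ^ 2 + cot (PI * INR n / INR q) ^ 4) (seq 1 (q - 1))) with (F4 q) in P.
 change (ssum (fun n => cot (PI * INR n / INR p) ^ 2 + cot (PI * INR n / INR p) ^ 4) (seq 1 (p - 1))) with (F4 p) in P.
 rewrite !F4_closed, !F2_closed in P by lia.
 rewrite !minus_INR in P by lia. simpl INR in P.
 replace (45 * INR p * ssum (fun n => cot (PI * INR n * INR p / INR q) * G4 (PI * INR n / INR q)) (seq 1 (q - 1)) +
  45 * INR q * ssum (fun n => cot (PI * INR n * INR q / INR p) * G4 (PI * INR n / INR p)) (seq 1 (p - 1)))
  with (45 * (INR p * ssum (fun n => cot (PI * INR n * INR p / INR q) * G4 (PI * INR n / INR q)) (seq 1 (q - 1)) +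
  INR q * ssum (fun n => cot (PI * INR n * INR q / INR p) * G4 (PI * INR n / INR p)) (seq 1 (p - 1)))) by ring.
 rewrite P. field. Qed.
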